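(* The map $R$ has infinite topological entropy: $h(R)=\infty$.
   Context: Define $\rho$ on binary words: for $b=b_1b_2\dots$, $\rho(b)$ is obtained by deleting every digit $b_n=0$ and replacing every $b_n=1$ by $0$ if $n$ is odd and by $1$ if $n$ is even. For $x\in(0,1]$ let $\beta(x)$ be the unique binary expansion of $x$ with infinitely many $1$'s. Define $R:[0,1]\to[0,1]$ by $R(0)=2/3$ and, for $x\in(0,1]$, $R(x)=\sum_{n\ge1}c_n2^{-n}$ where $c=\rho(\beta(x))$. The topological entropy (Bowen–Dinaburg definition, used here for a not necessarily continuous map) is $h(R)=\lim_{\varepsilon\to0}\limsup_{n\to\infty}\frac1n\log r(n,\varepsilon)$, where $r(n,\varepsilon)$ is the maximal cardinality of a subset of $[0,1]$ whose distinct points are at distance $\ge\varepsilon$ in the metric $d_n(x,y)=\max_{0\le i\le n}|R^i(x)-R^i(y)|$. *)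

(* Defs.v *)
From HB Require Import structures.
From mathcomp Require Import all_boot all_order all_algebra.
From mathcomp Require Import all_classical all_reals all_analysis.
Set Implicit Arguments. Unset Strict Implicit. Unset Printing Implicit Defensive.
Import Order.TTheory GRing.Theory Num.Theory.
Import numFieldNormedType.Exports.
Local Open Scope classical_set_scope.
Local Open Scope ring_scope.

(* Binary words b = b_1 b_2 ... are encoded as b : nat -> bool with
   b k = b_{k+1} (0-based indexing). *)

(* rho: the n-th letter (0-based) of rho(b) comes from the (n+1)-th digit 1
   of b, at 0-based position p; 1-based position p+1 is odd iff p is even,
   giving 0 (= false), and even iff p is odd, giving 1 (= true).  So the
   letter equals [odd p].  (For b with infinitely many 1's, rho(b) is an
   infinite word, which is the only case used.) *)
Definition rho (b : nat -> bool) : nat -> bool :=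
  fun n => `[< exists p : nat, [/\ b p, (\sum_(i < p) b i)%N = n & odd p] >].

Definition bin_val {R : realType} (c : nat -> bool) : R :=
  limn (fun N : nat => \sum_(k < N) ((c k)%:R / 2 ^+ k.+1 : R)).

Definition nonterm_expansion {R : realType} (x : R) (b : nat -> bool) : Prop :=
  (forall N : nat, exists n : nat, (N <= n)%N /\ b n) /\
  (fun N : nat => \sum_(k < N) ((b k)%:R / 2 ^+ k.+1 : R)) @ \oo --> x.

Definition beta {R : realType} (x : R) : nat -> bool :=
  xget (fun _ => false) (nonterm_expansion x).

Definition Rmap {R : realType} (x : R) : R :=
  if x == 0 then 2 / 3 else bin_val (rho (beta x)).

Definition dn {R : realType} (n : nat) (x y : R) : R :=
  \big[Num.max/0]_(i < n.+1) `|iter i Rmap x - iter i Rmap y|.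

Definition separated {R : realType} (n : nat) (eps : R) (S : seq R) : Prop :=
  [/\ uniq S, (forall x, x \in S -> 0 <= x <= 1) &
      (forall x y, x \in S -> y \in S -> x != y -> eps <= dn n x y)].

Definition r_sep {R : realType} (n : nat) (eps : R) : \bar R :=
  ereal_sup [set ((size S)%:R)%:E | S in [set S | separated n eps S]].

Definition growth {R : realType} (eps : R) : \bar R :=
  limn_esup (fun n : nat => ((n%:R)^-1)%:E * lne (r_sep n eps))%E.

(* Main.v *)
Require Import Defs.
From mathcomp Require Import all_boot all_order all_algebra.
From mathcomp Require Import all_classical all_reals all_analysis.
Import Order.TTheory GRing.Theory Num.Theory.
Import numFieldNormedType.Exports.
Local Open Scope classical_set_scope.
Local Open Scope ring_scope.
Set Implicit Arguments. Unset Strict Implicit. Unset Printing Implicit Defensive.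
From mathcomp Require Import zify.
From mathcomp Require Import ring lra.
Definition sgw (t : nat -> bool) : nat -> bool :=
  fun k => if odd k then t k./2 else ~~ t k./2.
Definition block (s : nat) (t : nat -> bool) : nat -> bool :=
  fun k => if (k < s)%N then false else if k == s then true
           else if k == s.+1 then false else t (k - s.+2)%N.

Lemma sum_sig2 t j : (\sum_(i < j.*2) sgw t i = j)%N.
Proof.
elim: j => [|j IH]; first by rewrite big_ord0.
rewrite doubleS !big_ord_recr /= IH /sgw /=.
rewrite odd_double uphalf_double half_double.
by case: (t j); rewrite ?addn0 ?addn1.
Qed.

Lemma sum_sig2S t j : (\sum_(i < (j.*2).+1) sgw t i = j + ~~ t j)%N.
Proof. by rewrite big_ord_recr /= sum_sig2 /sgw odd_double half_double. Qed.

Lemma sum_block_lo s t p : (p <= s)%N -> (\sum_(i < p) block s t i = 0)%N.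
Proof.
move=> ps; rewrite big1 // => i _; rewrite /block.
by rewrite (leq_trans (ltn_ord i) ps).
Qed.

Lemma sum_block_hi s t q :
  (\sum_(i < s.+2 + q) block s t i = 1 + \sum_(i < q) t i)%N.
Proof.
rewrite big_split_ord /=; congr (_ + _)%N.
  rewrite !big_ord_recr /= sum_block_lo // /block ltnn eqxx.
  have -> : (s.+1 < s)%N = false by rewrite ltnNge ltnW.
  by rewrite eqxx (gtn_eqF (ltnSn s)).
apply: eq_bigr => i _; rewrite /block.
have -> : (s.+2 + i < s)%N = false by lia.
have -> : (s.+2 + i == s)%N = false by lia.
have -> : (s.+2 + i == s.+1)%N = false by lia.
by rewrite addKn.
Qed.

Lemma rho_block s v : ~~ odd s -> v 0%N = false ->
  rho (block s (sgw (fun j => v j.+1))) = v.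
Proof.
move=> es v0; apply: funext => n; rewrite /rho.
set t := sgw (fun j => v j.+1).
set u := block s t.
have Hu : forall p, u p -> (p = s) \/ exists q, p = (s.+2 + q)%N /\ t q.
  move=> p; rewrite /u /block.
  case: ltnP => // sp; case: eqVneq => [->|ps]; first by left.
  case: eqVneq => // ps1 h; right; exists (p - s.+2)%N; split=> //.
  lia.
case: n => [|j].
  rewrite v0; apply: asboolF => -[p [up sp op]].
  case: (Hu p up) => [ps|[q [pq _]]]; first by move: op; rewrite ps (negbTE es).
  by move: sp; rewrite pq sum_block_hi.
case vj: (v j.+1).
  apply: asboolT; exists (s.+2 + (j.*2).+1)%N; split.
  - rewrite /u /block.
    have -> : (s.+2 + (j.*2).+1 < s)%N = false by lia.
    have -> : (s.+2 + (j.*2).+1 == s)%N = false by lia.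
    have -> : (s.+2 + (j.*2).+1 == s.+1)%N = false by lia.
    rewrite addKn /t /sgw /= odd_double /=.
    by rewrite uphalf_double.
  - by rewrite sum_block_hi sum_sig2S vj addn0.
  - by rewrite oddD /= odd_double (negbTE es).
apply: asboolF => -[p [up sp op]].
case: (Hu p up) => [ps|[q [pq sq]]]; first by move: op; rewrite ps (negbTE es).
move: op sp sq; rewrite pq oddD /= (negbTE es) /= => oq.
rewrite sum_block_hi -(odd_double_half q) oq /= sum_sig2S /t /sgw /=.
rewrite add0n odd_double uphalf_double /=.
case tq: (v q./2.+1) => //= h _.
have hj : q./2 = j by lia.
by rewrite hj vj in tq.
Qed.
Lemma block_lt s t k : (k < s)%N -> block s t k = false.
Proof. by rewrite /block => ->. Qed.

Lemma block_s s t : block s t s = true.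
Proof. by rewrite /block ltnn eqxx. Qed.

Lemma block_ones s t N : exists n, (N <= n)%N /\ block s (sgw t) n.
Proof.
exists (s.+2 + (N.*2 + t N))%N; split; first lia.
rewrite /block.
have -> : (s.+2 + (N.*2 + t N) < s)%N = false by lia.
have -> : (s.+2 + (N.*2 + t N) == s)%N = false by lia.
have -> : (s.+2 + (N.*2 + t N) == s.+1)%N = false by lia.
rewrite addKn /sgw oddD odd_double halfD odd_double /= half_double.
by case tN: (t N) => /=; rewrite add0n ?addn0 tN.
Qed.

Fixpoint W (f : nat -> nat) (d i : nat) : nat -> bool :=
  match d with
  | 0 => block (f i).*2.+2 (sgw (fun _ => false))
  | d'.+1 => block (f i).*2.+2 (sgw (fun j => W f d' i.+1 j.+1))
  end.

Lemma W_eq f d i : exists t, W f d i = block (f i).*2.+2 (sgw t).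
Proof. by case: d => [|d] /=; eexists. Qed.

Lemma rho_W f d i : rho (W f d.+1 i) = W f d i.+1.
Proof.
rewrite /=; apply: rho_block; first by rewrite /= odd_double.
by have [t ->] := W_eq f d i.+1.
Qed.

Lemma W_ones f d i N : exists n, (N <= n)%N /\ W f d i n.
Proof. have [t ->] := W_eq f d i; exact: block_ones. Qed.
Section Real.
Variable R : realType.
Implicit Types w : nat -> bool.

Definition Sp (w : nat -> bool) (N : nat) : R :=
  \sum_(k < N) ((w k)%:R / 2 ^+ k.+1 : R).
Definition h2 (k : nat) : R := (2 ^+ k)^-1.

Lemma h2_gt0 k : 0 < h2 k.
Proof. by rewrite /h2 invr_gt0 exprn_gt0. Qed.

Lemma h2S k : h2 k.+1 + h2 k.+1 = h2 k.
Proof.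
rewrite /h2 exprS; have : (2:R) ^+ k != 0 by rewrite expf_neq0 // pnatr_eq0.
by move=> h; field.
Qed.

Lemma h2_le k l : (k <= l)%N -> h2 l <= h2 k.
Proof.
move=> kl; rewrite -(subnKC kl); elim: (l - k)%N => [|m IH]; first by rewrite addn0.
apply: le_trans IH; rewrite addnS -(h2S (k + m)) lerDl; exact/ltW/h2_gt0.
Qed.

Lemma Sp_S w N : Sp w N.+1 = Sp w N + (w N)%:R * h2 N.+1.
Proof. by rewrite /Sp big_ord_recr. Qed.

Lemma term_ge0 w N : 0 <= (w N)%:R * h2 N.+1.
Proof. by rewrite mulr_ge0 // ltW // h2_gt0. Qed.

Lemma term_le w N : (w N)%:R * h2 N.+1 <= h2 N.+1.
Proof. case: (w N) => /=; first by rewrite mul1r. by rewrite mul0r ltW // h2_gt0. Qed.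

Lemma Sp_incr w : {homo Sp w : n m / (n <= m)%N >-> n <= m}.
Proof.
move=> n m nm; rewrite -(subnKC nm); elim: (m - n)%N => [|k IH]; first by rewrite addn0.
by rewrite addnS Sp_S; apply: le_trans IH _; rewrite lerDl term_ge0.
Qed.

Lemma Sp_upper w N k : Sp w (N + k) <= Sp w N + h2 N - h2 (N + k).
Proof.
elim: k => [|k IH]; first by rewrite addn0 addrK.
rewrite addnS Sp_S; apply: le_trans (lerD IH (term_le w _)) _.
by rewrite -(h2S (N + k)) opprD !addrA addrNK.
Qed.

Lemma Sp_le1 w N : Sp w N <= 1.
Proof.
have := Sp_upper w 0 N; rewrite add0n /Sp big_ord0 add0r /h2 expr0 invr1 => h.
apply: le_trans h _; rewrite lerBlDr lerDl; exact/ltW/h2_gt0.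
Qed.

Lemma Sp_ge0 w N : 0 <= Sp w N.
Proof. by have := Sp_incr w (leq0n N); rewrite /Sp big_ord0. Qed.

Lemma Sp_cvg w : cvgn (Sp w).
Proof.
apply/cvg_ex; eexists; apply: nondecreasing_cvgn; first exact: Sp_incr.
by exists 1 => _ [n _ <-]; exact: Sp_le1.
Qed.

Lemma lim_bounds w x : Sp w @ \oo --> x ->
  [/\ forall N, Sp w N <= x, forall N, x <= Sp w N + h2 N &
      forall m, w m -> Sp w m + h2 m.+1 <= x].
Proof.
move=> cx; have lx : limn (Sp w) = x by exact: cvg_lim.
have cv : cvgn (Sp w) by apply/cvg_ex; exists x.
have lo : forall N, Sp w N <= x.
  by move=> N; rewrite -lx; apply: nondecreasing_cvgn_le => //; exact: Sp_incr.
split => //.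
- move=> N; rewrite -lx; apply: limr_le => //; near=> n.
  have nN : (N <= n)%N by near: n; exists N.
  rewrite -(subnKC nN); apply: le_trans (Sp_upper w N _) _.
  by rewrite lerBlDr lerDl ltW // h2_gt0.
- move=> m wm; apply: le_trans (lo m.+1); rewrite Sp_S wm mul1r //.
Unshelve. all: by end_near.
Qed.

End Real.
Section Real2.
Variable R : realType.
Implicit Types w : nat -> bool.

Lemma Sp_prefix w1 w2 n : (forall m, (m < n)%N -> w1 m = w2 m) ->
  Sp R w1 n = Sp R w2 n.
Proof. by move=> h; apply: eq_bigr => i _; rewrite h. Qed.

Lemma uniq_key b c (x : R) n : (forall m, (m < n)%N -> b m = c m) ->
  b n = true -> c n = false -> (forall N, exists m, (N <= m)%N /\ b m) ->
  Sp R b @ \oo --> x -> Sp R c @ \oo --> x -> False.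
Proof.
move=> pre bn cn bones cb cc.
have [m [nm bm]] := bones n.+1.
have [lob _ onb] := lim_bounds cb.
have [_ upc _] := lim_bounds cc.
have h1 := onb m bm.
have h2' := upc n.+1.
have h3 := Sp_incr R b nm.
move: h2'; rewrite Sp_S cn mul0r addr0 -(Sp_prefix pre) => h2'.
move: h3; rewrite Sp_S bn mul1r => h3.
have := h2_gt0 R m.+1; lra.
Qed.

Lemma expansion_unique (x : R) b c :
  nonterm_expansion x b -> nonterm_expansion x c -> b = c.
Proof.
move=> [bo cb] [co cc]; apply: funext => n; elim/ltn_ind: n => n IH.
case bn: (b n); case cn: (c n) => //.
  by exfalso; apply: (uniq_key IH bn cn bo cb cc).
exfalso; apply: (@uniq_key c b x n) => // m mn; by rewrite IH.
Qed.

Lemma beta_bin_val w : (forall N, exists m, (N <= m)%N /\ w m) ->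
  beta (bin_val w : R) = w.
Proof.
move=> wo; have ne : nonterm_expansion (bin_val w : R) w.
  split => //; rewrite /bin_val; exact: (@Sp_cvg R w).
by rewrite /beta; apply: xget_unique => // y /expansion_unique/(_ ne).
Qed.

Lemma bin_val_gt0 w : (exists m, w m) -> 0 < (bin_val w : R).
Proof.
move=> [m wm]; have [lo _ on] := lim_bounds (@Sp_cvg R w).
apply: lt_le_trans (on m wm); apply: lt_le_trans (h2_gt0 R m.+1) _.
by rewrite lerDr Sp_ge0.
Qed.

Lemma Rmap_bin_val w : (forall N, exists m, (N <= m)%N /\ w m) ->
  Rmap (bin_val w : R) = bin_val (rho w).
Proof.
move=> wo; rewrite /Rmap beta_bin_val // ifF //; apply/negbTE.
have [m [_ wm]] := wo 0%N.
by rewrite gt_eqF // bin_val_gt0 //; exists m.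
Qed.

End Real2.
Section Real3.
Variable R : realType.

Lemma iter_W f n i : (i <= n)%N ->
  iter i Rmap (bin_val (W f n 0) : R) = bin_val (W f (n - i) i).
Proof.
elim: i => [|i IH] ni; first by rewrite subn0.
rewrite iterS IH ?(ltnW ni) //.
have -> : (n - i = (n - i.+1).+1)%N by lia.
by rewrite Rmap_bin_val; [rewrite rho_W | exact: W_ones].
Qed.

Lemma W_bounds f d i :
  h2 R (f i).*2.+3 <= bin_val (W f d i) <= h2 R (f i).*2.+2.
Proof.
have [t ->] := W_eq f d i; set s := (f i).*2.+2.
have [_ up on] := lim_bounds (@Sp_cvg R (block s (sgw t))).
have z : Sp R (block s (sgw t)) s = 0.
  by rewrite /Sp big1 // => k _; rewrite block_lt // mul0r.
apply/andP; split.
  by have := on s (block_s _ _); rewrite z add0r.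
by have := up s; rewrite z add0r.
Qed.

Lemma sep_lt f g d d' i j : (f i < g j)%N ->
  h2 R (f i).*2.+4 <= bin_val (W f d i) - bin_val (W g d' j).
Proof.
move=> lt; have /andP[lo _] := W_bounds f d i.
have /andP[_ up] := W_bounds g d' j.
have : h2 R (g j).*2.+2 <= h2 R (f i).*2.+4 by apply: h2_le; lia.
have := h2S R (f i).*2.+3; lra.
Qed.

Lemma sep_val f g d d' i K : f i != g i -> (f i < K)%N -> (g i < K)%N ->
  h2 R K.*2.+2 <= `|bin_val (W f d i) - bin_val (W g d' i) : R|.
Proof.
move=> ne fK gK; case: (ltngtP (f i) (g i)) => fg; last by rewrite fg eqxx in ne.
- apply: le_trans (le_trans (sep_lt d d' fg) (ler_norm _)); apply: h2_le; lia.
- rewrite distrC; apply: le_trans (le_trans (sep_lt d' d fg) (ler_norm _)); apply: h2_le; lia.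
Qed.

Lemma bigmax_ge_seq (I : eqType) (r : seq I) (F : I -> R) (i : I) :
  i \in r -> F i <= \big[Num.max/0]_(j <- r) F j.
Proof.
elim: r => [|a r IH] //; rewrite inE big_cons => /orP[/eqP ->|ir].
  by rewrite le_max lexx.
by rewrite le_max IH ?orbT.
Qed.

Lemma bigmax_ge m (F : 'I_m -> R) (i : 'I_m) : F i <= \big[Num.max/0]_(j < m) F j.
Proof. by apply: bigmax_ge_seq; rewrite mem_index_enum. Qed.

Lemma W_in01 f d i : 0 <= (bin_val (W f d i) : R) <= 1.
Proof.
have /andP[lo up] := W_bounds f d i.
have := h2_gt0 R (f i).*2.+3; have := h2_le R (leq0n (f i).*2.+2).
have h0 : h2 R 0 = 1 by rewrite /h2 expr0 invr1.
rewrite h0 => a b; apply/andP; split; lra.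
Qed.

End Real3.
Section Real4.
Variable R : realType.

Definition pt (K n : nat) (f : {ffun 'I_n.+1 -> 'I_K}) : R :=
  bin_val (W (fun i => nat_of_ord (f (inord i))) n 0).

Lemma sep_pts K n (f g : {ffun 'I_n.+1 -> 'I_K}) : f != g ->
  exists i : 'I_n.+1,
    h2 R K.*2.+2 <= `|iter i Rmap (pt f) - iter i Rmap (pt g)|.
Proof.
move=> ne.
have [i ne'] : exists i, f i != g i.
  apply/existsP; move: ne; apply: contraNT => /existsPn h.
  by apply/eqP/ffunP => i; move/negPn: (h i) => /eqP.
exists i; rewrite /pt !iter_W ?(leq_ord i) //.
apply: sep_val => /=; rewrite ?inord_val ?ltn_ord //.
Qed.

Lemma pt_inj K n : injective (@pt K n).
Proof.
move=> f g e; apply/eqP; apply: contraT => ne.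
have [i] := sep_pts ne; rewrite e subrr normr0.
by have := h2_gt0 R K.*2.+2; rewrite leNgt => ->.
Qed.

Lemma r_sep_ge K n (eps : R) : 0 < eps -> eps <= h2 R K.*2.+2 ->
  (((K ^ n.+1)%N)%:R%:E <= r_sep n eps)%E.
Proof.
move=> e0 eK; apply: ereal_sup_ubound.
exists [seq @pt K n f | f <- enum {: {ffun 'I_n.+1 -> 'I_K}}]; last first.
  by rewrite size_map -cardE card_ffun !card_ord.
split.
- by rewrite map_inj_uniq ?enum_uniq //; exact: pt_inj.
- by move=> x /mapP[f _ ->]; exact: W_in01.
- move=> x y /mapP[f _ ->] /mapP[g _ ->] ne.
  have fg : f != g by apply: contraNneq ne => ->.
  have [i hi] := sep_pts fg.
  apply: le_trans eK _; apply: le_trans hi _.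
  exact: (bigmax_ge (fun j : 'I_n.+1 => `|iter j Rmap (pt f) - iter j Rmap (pt g)|)).
Qed.

End Real4.
Section Real5.
Variable R : realType.
Local Open Scope ereal_scope.

Lemma term_ge K n (eps : R) : (0 < K)%N -> (0 < n)%N -> (0 < eps)%R ->
  (eps <= h2 R K.*2.+2)%R ->
  (ln (K%:R : R))%:E <= ((n%:R)^-1)%:E * lne (r_sep n eps).
Proof.
move=> K0 n0 e0 eK.
have hK : (0 < K%:R :> R)%R by rewrite ltr0n.
have L0 : (0 <= ln (K%:R : R))%R by rewrite ln_ge0 // ler1n.
have h := r_sep_ge n e0 eK.
have hl : lne ((((K ^ n.+1)%N)%:R : R)%:E) <= lne (r_sep n eps).
  rewrite lee_lne //; rewrite in_itv /= ?lee_fin ?ler0n ?leey //.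
  by rewrite (le_trans _ h) // lee_fin ler0n.
rewrite lne_EFin ?ltr0n ?expn_gt0 ?K0 // natrX lnXn // in hl.
apply: le_trans (lee_wpmul2l _ hl); last by rewrite lee_fin invr_ge0 ler0n.
rewrite -EFinM lee_fin.
have nz : (n%:R : R) != 0%R by rewrite pnatr_eq0 -lt0n.
have -> : ((n%:R)^-1 * (ln (K%:R : R) *+ n.+1) = ln (K%:R : R) + ln (K%:R : R) * (n%:R)^-1 :> R)%R.
  by rewrite mulrSr -mulr_natr; field.
by rewrite lerDl mulr_ge0 // invr_ge0 ler0n.
Qed.

Lemma growth_ge K (eps : R) : (0 < K)%N -> (0 < eps)%R -> (eps <= h2 R K.*2.+2)%R ->
  (ln (K%:R : R))%:E <= growth eps.
Proof.
move=> K0 e0 eK; rewrite /growth limn_esup_lim; apply: lime_ge.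
  exact: is_cvg_esups.
near=> n.
have n0 : (0 < n)%N by near: n; exists 1%N.
apply: le_trans (term_ge K0 n0 e0 eK) _.
by apply: ereal_sup_ubound; exists n => /=.
Unshelve. all: by end_near.
Qed.

End Real5.

Theorem proposition6p11 (R : realType) :
  (@growth R) x @[x --> 0^'+] --> +oo%E.
Proof.
apply/cvgeyPge => A.
set K := (Num.Def.trunc (expR A)).+1.
have K0 : (0 < K)%N by [].
have AK : A <= ln (K%:R : R).
  rewrite -[X in X <= _]expRK ler_ln ?posrE ?expR_gt0 ?ltr0n //.
  exact/ltW/truncnS_gt.
near=> e.
have e0 : 0 < e by near: e; exact: nbhs_right_gt.
have eK : e <= h2 R K.*2.+2.
  by apply/ltW; near: e; apply: nbhs_right_lt; exact: h2_gt0.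
apply: le_trans (growth_ge K0 e0 eK); by rewrite lee_fin.
Unshelve. all: by end_near.
Qed.
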